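(* If $G=\prod_{i=1}^tK[a_i,b_i]$ with $2\le b_1\le\cdots\le b_t$, then $$\mathrm{IR}(G)\le\frac{b_1}{2b_1-1}\prod_{i=1}^ta_ib_i.$$
   Context: $K[a,b]$ is the balanced complete $b$-partite graph with $b$ parts of size $a$ (vertices adjacent iff in different parts); $\prod$ denotes the direct product of graphs ($(g_1,h_1)\sim(g_2,h_2)$ iff $g_1\sim g_2$ and $h_1\sim h_2$). A set $S$ is irredundant if every $v\in S$ has a private neighbor, i.e. a vertex in $N[v]\setminus N[S\setminus\{v\}]$ (closed neighborhoods). $\mathrm{IR}(G)$ is the maximum size of an irredundant set. *)

(* Defs.v *)
From HB Require Import structures.
From mathcomp Require Import all_boot all_order all_algebra.
Set Implicit Arguments. Unset Strict Implicit. Unset Printing Implicit Defensive.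

Definition cnbr (V : finType) (e : rel V) (v u : V) : bool := (u == v) || e v u.

Definition private_nbr (V : finType) (e : rel V) (S : {set V}) (v u : V) : bool :=
  cnbr e v u && [forall w in S :\ v, ~~ cnbr e w u].

Definition irredundant (V : finType) (e : rel V) (S : {set V}) : bool :=
  [forall v in S, exists u, private_nbr e S v u].

Definition IR (V : finType) (e : rel V) : nat :=
  \max_(S : {set V} | irredundant e S) #|S|.

(* Vertices of K[a,b]: pairs (part, index in part), part : 'I_b, index : 'I_a;
   adjacent iff in different parts. *)
Definition prodK_vertex (t : nat) (a b : nat -> nat) : finType :=
  {dffun forall i : 'I_t, ('I_(b i) * 'I_(a i))%type}.

Definition prodK_adj (t : nat) (a b : nat -> nat) : rel (prodK_vertex t a b) :=
  fun g h => [forall i : 'I_t, (g i).1 != (h i).1].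

(* Main.v *)
Require Import Defs.
From HB Require Import structures.
From mathcomp Require Import all_boot all_order all_algebra.
From mathcomp Require Import zify.
Import Order.TTheory GRing.Theory Num.Theory.
Section Gen.
Variables (V : finType) (e : rel V) (sg : V -> V).
Hypothesis sg_inj : injective sg.
Hypothesis sg_neq : forall v, sg v != v.
Hypothesis sg_e1 : forall v, e v (sg v).
Hypothesis sg_e2 : forall v, e (sg v) v.

Lemma privP (S : {set V}) v u w : private_nbr e S v u -> w \in S -> w != v -> ~~ cnbr e w u.
Proof. by case/andP=> _ /forallP /(_ w); rewrite !inE => H Hw Hn; move: H; rewrite Hn Hw. Qed.
Arguments privP {S v u w}.

Lemma irr_half (S : {set V}) : irredundant e S -> 2 * #|S| <= #|V|.
Proof.
move=> /forallP Hirr.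
pose f v := if private_nbr e S v v then v else odflt v [pick u | private_nbr e S v u].
have fP : forall v, v \in S -> private_nbr e S v (f v).
  move=> v vS; rewrite /f; case: ifP => // _.
  case: pickP => [u //|none] /=.
  by move: (Hirr v); rewrite vS /= => /existsP [u]; rewrite none.
pose S1 := [set v in S | f v == v].
pose S2 := S :\: S1.
have hS : #|S1| + #|S2| = #|S|.
  rewrite -(cardsID S1 S); congr (_ + _).
  by have -> : S :&: S1 = S1 by apply/setIidPr/subsetP => x; rewrite inE => /andP[].
have cnbr_refl : forall x, cnbr e x x by move=> x; rewrite /cnbr eqxx.
have injf : {in S2 &, injective f}.
  move=> w w'; rewrite !inE => /andP [_ wS] /andP [_ w'S] Hf.
  apply/eqP; apply/negPn/negP => Hne.
  have := privP (fP w wS) w'S; rewrite eq_sym Hne => /(_ isT).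
  by rewrite Hf; case/andP: (fP w' w'S) => ->.
have injs : {in S1 &, injective sg} by move=> x y _ _; apply: sg_inj.
have dAB : S :&: (f @: S2) = set0.
  apply/setP=> u; rewrite !inE; apply/negP=> /andP [uS /imsetP [w]].
  rewrite !inE => /andP [Hw wS] Hu.
  have Hne : u != w by rewrite Hu; move: Hw; rewrite wS.
  by have := privP (fP w wS) uS Hne; rewrite -Hu cnbr_refl.
have dAC : S :&: (sg @: S1) = set0.
  apply/setP=> u; rewrite !inE; apply/negP=> /andP [uS /imsetP [v]].
  rewrite !inE => /andP [vS /eqP Hv] Hu.
  have Hne : u != v by rewrite Hu sg_neq.
  have := privP (fP v vS) uS Hne; rewrite Hv /cnbr Hu sg_e2 orbT //.
have dBC : (f @: S2) :&: (sg @: S1) = set0.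
  apply/setP=> u; rewrite !inE; apply/negP=> /andP [/imsetP [w]].
  rewrite !inE => /andP [Hw wS] Hu /imsetP [v]; rewrite !inE => /andP [vS /eqP Hv] Hu'.
  have Hne : v != w by apply/eqP=> E; move: Hw; rewrite -E vS Hv eqxx.
  by have := privP (fP w wS) vS Hne; rewrite -Hu Hu' /cnbr sg_e1 orbT.
have := max_card (S :|: f @: S2 :|: sg @: S1).
rewrite cardsU setIUl dAC dBC setU0 cards0 subn0 cardsU dAB cards0 subn0.
rewrite card_in_imset // card_in_imset //.
rewrite -hS; lia.
Qed.
End Gen.
Section P.
Variables (t : nat) (a b : nat -> nat).
Hypothesis ht : 0 < t.
Hypothesis hb2 : forall i, i < t -> 2 <= b i.

Definition sgm (g : prodK_vertex t a b) : prodK_vertex t a b :=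
  [ffun i => (ordS (g i).1, (g i).2)].

Lemma ordS_neq n (x : 'I_n) : 2 <= n -> ordS x != x.
Proof.
move=> hn; apply/eqP => /(congr1 val) /=.
have := ltn_ord x; case: (ltngtP x.+1 n) => H1 H2.
- by rewrite modn_small //; lia.
- lia.
- by rewrite H1 modnn; lia.
Qed.

Lemma sgm_e (g : prodK_vertex t a b) : prodK_adj g (sgm g) && prodK_adj (sgm g) g.
Proof.
apply/andP; split; apply/forallP => i; rewrite /sgm ffunE /=.
  by rewrite eq_sym ordS_neq // hb2.
by rewrite ordS_neq // hb2.
Qed.

Lemma sgm_inj : injective sgm.
Proof.
move=> g h E; apply/ffunP => i; have := congr1 (fun f : prodK_vertex t a b => f i) E.
rewrite /sgm !ffunE => Ep; have E1 := ordS_inj (congr1 fst Ep); have E2 := congr1 snd Ep.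
by case: (g i) (h i) E1 E2 => [x y] [x' y'] /= -> ->.
Qed.

Lemma sgm_neq g : sgm g != g.
Proof.
apply/eqP => /(congr1 (fun f : prodK_vertex t a b => f (Ordinal ht))); rewrite /sgm ffunE.
move=> /(congr1 fst) E; move: (@ordS_neq _ (g (Ordinal ht)).1 (hb2 0 ht)) => /eqP; apply; exact: E.
Qed.

Lemma cardV : #|prodK_vertex t a b| = \prod_(i < t) (a i * b i).
Proof.
rewrite card_dep_ffun foldrE big_map big_enum /=.
by apply: eq_bigr => i _; rewrite card_prod !card_ord mulnC.
Qed.
End P.

Theorem theorem5p8 (t : nat) (a b : nat -> nat)
  (ht : 0 < t)
  (hb2 : forall i, i < t -> 2 <= b i)
  (hmono : forall i j, i <= j -> j < t -> b i <= b j) :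
  (((IR (@prodK_adj t a b))%:R : rat)
    <= (b 0%N)%:R / (2 * b 0 - 1)%N%:R * \prod_(i < t) (a i * b i)%:R)%R.
Proof.
have H : IR (@prodK_adj t a b) * 2 <= \prod_(i < t) (a i * b i).
  rewrite -cardV -leq_divRL //; apply/bigmax_leqP => S HS.
  rewrite leq_divRL // mulnC.
  apply: (@irr_half _ (@prodK_adj t a b) (@sgm t a b) (@sgm_inj t a b) (@sgm_neq t a b ht hb2)) HS.
    by move=> v; case/andP: (@sgm_e t a b ht hb2 v).
  by move=> v; case/andP: (@sgm_e t a b ht hb2 v).
have hb0 := hb2 0 ht.
rewrite -natr_prod mulrAC ler_pdivlMr; last by rewrite ltr0n; lia.
rewrite -!natrM ler_nat.
apply: (leq_trans (leq_mul (leqnn _) (leq_subr 1 _))).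
by rewrite mulnA [X in X <= _]mulnC leq_mul2l H orbT.
Qed.
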